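(* Let $A$ be a finite set and $p : A \to [0,1]$. Let $\{X_i(u)\}_{i \ge 1, u \in A}$ be independent random variables with $X_i(u) \sim \mathrm{Bernoulli}(p(u))$. For $n \ge 1$ define $U_n(u) := \mathds{1}\{\sum_{i=1}^n X_i(u) = 1\}$, $Z_n(u) := \mathds{1}\{X_1(u) = \cdots = X_n(u) = 0\}$, $R_n := \sum_{u \in A} Z_n(u)\, p(u)$, $\hat R_n := \frac{1}{n}\sum_{u \in A} U_n(u)$, and $\lambda := \sum_{u \in A} p(u)$. For $\delta \in (0,1)$ let \[ \beta_n := \left(1+\sqrt{2}\right)\sqrt{\frac{\lambda \log(4/\delta)}{n}} + \frac{1}{3n}\log\frac{4}{\delta}. \] Then with probability at least $1-\delta$, \[ -\beta_n - \frac{\lambda}{n} \le R_n - \hat R_n \le \beta_n . \]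
   Context: Model: a single influencer is connected to a finite set $A$ of basic nodes; at each selection $i$ of the influencer, each node $u\in A$ is activated ($X_i(u)=1$) independently with probability $p(u)$, independently across selections. $R_n$ is the remaining potential (expected number of new activations at the next selection) and $\hat R_n$ is the Good-Turing estimator (proportion of hapaxes). *)

(* Defs.v *)
From mathcomp Require Import all_boot.
From Stdlib Require Import Reals.

Set Implicit Arguments.
Unset Strict Implicit.
Unset Printing Implicit Defensive.

(* Outcomes of the first n selections: w (i, u) = X_{i+1}(u). *)
Definition outcome (A : finType) (n : nat) := {ffun 'I_n * A -> bool}.

Definition weight (A : finType) (p : A -> R) (n : nat) (w : outcome A n) : R :=
  \big[Rmult/1%R]_(k : 'I_n * A) (if w k then p k.2 else (1 - p k.2)%R).

Definition prob (A : finType) (p : A -> R) (n : nat) (E : outcome A n -> bool) : R :=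
  \big[Rplus/0%R]_(w : outcome A n | E w) weight p w.

Definition nact (A : finType) (n : nat) (w : outcome A n) (u : A) : nat :=
  \sum_(i < n) w (i, u).

Definition Un (A : finType) (n : nat) (w : outcome A n) (u : A) : bool := nact w u == 1.
Definition Zn (A : finType) (n : nat) (w : outcome A n) (u : A) : bool := nact w u == 0.

Definition Rn (A : finType) (p : A -> R) (n : nat) (w : outcome A n) : R :=
  \big[Rplus/0%R]_(u : A) (if Zn w u then p u else 0%R).

Definition Rhat (A : finType) (n : nat) (w : outcome A n) : R :=
  (INR (\sum_(u : A) Un w u) / INR n)%R.

Definition lambda (A : finType) (p : A -> R) : R := \big[Rplus/0%R]_(u : A) p u.

Definition beta (A : finType) (p : A -> R) (n : nat) (delta : R) : R :=
  ((1 + sqrt 2) * sqrt (lambda p * ln (4 / delta) / INR n)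
   + / (3 * INR n) * ln (4 / delta))%R.

Definition Rleb (x y : R) : bool := if Rle_dec x y then true else false.

(* Main.v *)
Require Import Defs.
From mathcomp Require Import all_boot.
From Stdlib Require Import Reals.
From Stdlib Require Import Lra Psatz.
From Coquelicot Require Coquelicot.
From HB Require Import structures.
Section Calc.
Import Coquelicot.Coquelicot.
Local Open Scope R_scope.

Lemma mono0 (f df : R -> R) (x : R) : 0 <= x -> f 0 = 0 ->
  (forall y, 0 <= y <= x -> is_derive f y (df y)) ->
  (forall y, 0 <= y <= x -> 0 <= df y) -> 0 <= f x.
Proof.
move=> hx h0 hd hp.
destruct (Req_dec x 0) as [->|nx]; first lra.
have [c [h1 [h2 h3]]] : exists c, 0 <= c /\ c <= x /\ f x = f 0 + df c * (x - 0).
  apply: MVT_cor3; first lra.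
  move=> y hy1 hy2; apply/is_derive_Reals; apply: hd; lra.
rewrite h3 h0; have := hp c (conj h1 h2); nra.
Qed.

Lemma exp_ge2 x : 0 <= x -> 1 + x + x^2/2 <= exp x.
Proof.
move=> hx; have := exp_ge_taylor x 2 hx.
rewrite /sum_f_R0 /=. lra.
Qed.

Lemma E1 s : 0 <= s -> exp (-s) <= 1 - s + s^2/2.
Proof.
move=> hs.
suff : 0 <= 1 - s + s ^ 2 / 2 - exp (- s) by lra.
apply: (@mono0 (fun x => 1 - x + x^2/2 - exp (-x)) (fun x => -1 + x + exp(-x)) s hs).
- rewrite /= Ropp_0 exp_0; lra.
- move=> y _; auto_derive; auto; lra.
- move=> y _; have := exp_ineq1_le (-y); lra.
Qed.

Lemma E3 c x : 0 <= c <= 1 -> 0 <= x ->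
  exp (-x) * (exp (c*x) - 1 - c*x) <= c^2*x/2.
Proof.
move=> hc hx.
suff : 0 <= c ^ 2 * x / 2 - exp (- x) * (exp (c * x) - 1 - c * x) by lra.
apply: (@mono0 (fun x => c^2*x/2 - exp (-x) * (exp (c*x) - 1 - c*x))
  (fun x => c^2/2 + exp (-x) * (exp (c*x) - 1 - c*x) - exp (-x) * (c * exp (c*x) - c)) x hx).
- rewrite /= Ropp_0 !Rmult_0_r exp_0; lra.
- move=> y _; auto_derive; auto; lra.
- move=> y [hy _].
  have e1 := exp_ineq1_le (c*y).
  have e2 := exp_ge2 y hy.
  have e3 : exp (-y) * exp y = 1 by rewrite -exp_plus Rplus_opp_l exp_0.
  have e4 := exp_pos (-y).
  have e5 : y * exp (-y) <= 1/2 by nra.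
  have e6 : exp (-y) * ((1-c)*(1 - exp (c*y)) + c*y) <= exp (-y) * (c^2*y) by
    apply: Rmult_le_compat_l; nra.
  have e7 : exp (-y) * (c^2*y) <= c^2/2 by nra.
  nra.
Qed.

Lemma E4 s : 0 <= s -> exp s - 1 - s <= s^2/2 * exp s.
Proof.
move=> hs.
have : 0 <= exp (- s) * (1 + s) - 1 + s ^ 2 / 2.
  apply: (@mono0 (fun x => exp (-x) * (1 + x) - 1 + x^2/2) (fun x => x * (1 - exp (-x))) s hs).
  - rewrite /= Ropp_0 exp_0; lra.
  - move=> y _; auto_derive; auto; lra.
  - move=> y [hy _]; apply: Rmult_le_pos => //.
    have := exp_ineq1_le y; have := exp_pos y.
    have e3 : exp (-y) * exp y = 1 by rewrite -exp_plus Rplus_opp_l exp_0.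
    have := exp_pos (-y). nra.
have e3 : exp (-s) * exp s = 1 by rewrite -exp_plus Rplus_opp_l exp_0.
have := exp_pos s. nra.
Qed.
End Calc.
Open Scope R_scope.

Lemma exp_pow x (m : nat) : exp x ^ m = exp (INR m * x).
Proof.
elim: m => [|m IH]; first by rewrite /= Rmult_0_l exp_0.
by rewrite S_INR /= IH -exp_plus; congr exp; ring.
Qed.

Lemma pow_le_exp p (m : nat) : 0 <= p <= 1 -> (1-p)^m <= exp (-(INR m * p)).
Proof.
move=> hp.
have h : exp (-(INR m * p)) = exp (-p) ^ m by rewrite exp_pow; congr exp; ring.
rewrite h; apply: pow_incr; split; first lra.
have := exp_ineq1_le (-p); lra.
Qed.

Lemma bern p (m : nat) : 0 <= p <= 1 -> (1-p)^m * (1 + INR m * p) <= 1.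
Proof.
move=> hp; elim: m => [|m IH]; first by rewrite /=; lra.
rewrite S_INR /=.
have h0 : 0 <= (1-p)^m by apply: pow_le; lra.
have : (1 - p) * (1 + (INR m + 1) * p) <= 1 + INR m * p.
  have := pos_INR m; nra.
nra.
Qed.

Lemma exp_mono x y : x <= y -> exp x <= exp y.
Proof. case=> h; [left; exact: exp_increasing | by rewrite h; lra]. Qed.

Lemma exp_dbl a b : 0 <= b -> exp a <= b -> exp (a + a) <= b * b.
Proof. move=> hb h; rewrite exp_plus; have := exp_pos a; nra. Qed.

Lemma exp_num :
  exp (1/2) <= 1.672 /\ exp 1 <= 2.796 /\ exp 2 <= 7.818 /\ exp 4 <= 61.2.
Proof.
have h1 : exp (1/20) <= 1.05264.
  have := exp_ineq1_le (-(1/20)).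
  have e3 : exp (-(1/20)) * exp (1/20) = 1 by rewrite -exp_plus Rplus_opp_l exp_0.
  have := exp_pos (1/20). nra.
have h2 : exp (1/10) <= 1.1081.
  have := exp_dbl (1/20) (1.05264) ltac:(lra) h1. 
  by replace (1/20 + 1/20) with (1/10) by field; lra.
have h3 : exp (1/5) <= 1.228.
  have := exp_dbl (1/10) (1.1081) ltac:(lra) h2.
  by replace (1/10 + 1/10) with (1/5) by field; lra.
have h4 : exp (2/5) <= 1.508.
  have := exp_dbl (1/5) (1.228) ltac:(lra) h3.
  by replace (1/5 + 1/5) with (2/5) by field; lra.
have h5 : exp (1/2) <= 1.672.
  replace (1/2) with (2/5 + 1/10) by field; rewrite exp_plus.
  have := exp_pos (2/5); have := exp_pos (1/10); nra.
have h6 : exp 1 <= 2.796.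
  have := exp_dbl (1/2) (1.672) ltac:(lra) h5.
  by replace (1/2 + 1/2) with 1 by field; lra.
have h7 : exp 2 <= 7.818.
  have := exp_dbl 1 (2.796) ltac:(lra) h6.
  by replace (1 + 1) with 2 by field; lra.
have h8 : exp 4 <= 61.2.
  have := exp_dbl 2 (7.818) ltac:(lra) h7.
  by replace (2 + 2) with 4 by field; lra.
tauto.
Qed.

Lemma sqrt2_ge : 1.41 <= sqrt 2.
Proof.
have h := sqrt_sqrt 2 ltac:(lra). have := sqrt_pos 2.
nra.
Qed.

Lemma choose_s y r : 0 <= y -> 2.41 <= r -> exists s, 0 <= s /\
  y^2 * (exp s - 1 - s + s^2/2) - s * (r * y + 1/3) <= -1.
Proof.
move=> hy hr.
have [e12 [e1 [e2 e4]]] := exp_num.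
destruct (Rle_lt_dec y (1/10)) as [c1|c1].
  exists 4; split; first lra.
  have : y^2 <= y/10 by nra.
  nra.
destruct (Rle_lt_dec y (1/2)) as [c2|c2].
  exists 2; split; first lra.
  have : y^2 <= 0.6*y - 0.05 by nra.
  nra.
destruct (Rle_lt_dec y (3/2)) as [c3|c3].
  exists 1; split; first lra.
  have : y^2 <= 2*y - 0.75 by nra.
  nra.
destruct (Rle_lt_dec y 2) as [c4|c4].
  exists (1/2); split; first lra.
  have : y^2 <= 3.5*y - 3 by nra.
  nra.
exists (/y); split; first by left; apply: Rinv_0_lt_compat; lra.
have hs : 0 <= /y <= 1/2.
  split; first by left; apply: Rinv_0_lt_compat; lra.
  apply: Rle_trans (_ : /2 <= 1/2); last lra.
  apply: Rinv_le_contravar; lra.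
have ha := E4 (/y) (proj1 hs).
have hb : exp (/y) <= 1.672.
  apply: Rle_trans e12; apply: exp_mono; lra.
have hyy : y * /y = 1 by field; lra.
set s := /y in ha hb hs hyy *.
have hs2 : y^2 * s^2 = 1 by replace (y^2*s^2) with ((y*s)^2) by ring; rewrite hyy; ring.
have : y^2 * (exp s - 1 - s + s^2/2) <= y^2 * (s^2/2 * 1.672 + s^2/2).
  apply: Rmult_le_compat_l; first nra.
  have := exp_pos s. nra.
nra.
Qed.

Definition Mf (pu : R) (n : nat) (tau : R) : R :=
  1 + (1-pu)^n * (exp (tau*pu) - 1)
    + INR n * pu * (1-pu)^n.-1 * (exp (- tau / INR n) - 1).

Lemma pow_split pu (n : nat) : (1 <= n)%nat -> (1-pu)^n = (1-pu)^n.-1 * (1-pu).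
Proof.
move=> hn; have e : n = n.-1.+1 by rewrite prednK.
by rewrite {1}e /= Rmult_comm.
Qed.

Lemma pow_le1 pu (m : nat) : 0 <= pu <= 1 -> 0 <= (1-pu)^m <= 1.
Proof.
move=> hp; split; first (apply: pow_le; lra).
apply: (Rle_trans _ (1^m)); last by rewrite pow1; lra.
apply: pow_incr; split; lra.
Qed.

Lemma xb0_le1 pu (n : nat) : 0 <= pu <= 1 -> (1 <= n)%nat -> INR n * pu * (1-pu)^n.-1 <= 1.
Proof.
move=> hp hn.
have hb := bern pu n.-1 hp.
have e : INR n.-1 = INR n - 1.
  have : INR n = INR n.-1 + 1 by rewrite -S_INR prednK.
  lra.
rewrite e in hb.
have := pow_le1 pu n.-1 hp. nra.
Qed.

Lemma mgf_up pu (n : nat) c : 0 <= pu <= 1 -> (1 <= n)%nat -> 0 < c <= 1 ->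
  Mf pu n (INR n * c) <= exp (pu * INR n * c^2).
Proof.
move=> hp hn hc.
have hN : 0 < INR n by apply: lt_0_INR; apply/ltP.
rewrite /Mf.
set N := INR n in hN *.
set x := N * pu.
have hx : 0 <= x by rewrite /x; nra.
have e1 : N * c * pu = c * x by rewrite /x; ring.
have e2 : - (N * c) / N = - c by field; lra.
rewrite e1 e2.
have ha := pow_split pu n hn.
set b0 := (1-pu)^n.-1 in ha *.
set a := (1-pu)^n in ha *.
have hb0 : 0 <= b0 <= 1 by apply: pow_le1.
have hae : a <= exp (-x) by rewrite /a /x; apply: pow_le_exp.
have h3 := E3 c x (conj (Rlt_le _ _ (proj1 hc)) (proj2 hc)) hx.
have hphi := exp_ineq1_le (c*x).
have h4 : a * (exp (c*x) - 1 - c*x) <= c^2*x/2.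
  apply: Rle_trans h3; apply: Rmult_le_compat_r; lra.
have h5 := E1 c (Rlt_le _ _ (proj1 hc)).
have h6 : x * b0 * (exp (-c) - 1) <= x * b0 * (-c + c^2/2).
  apply: Rmult_le_compat_l; last lra.
  apply: Rmult_le_pos; nra.
have h7 : 1 + c^2 * x <= exp (pu * N * c^2).
  have -> : pu * N * c^2 = c^2 * x by rewrite /x; ring.
  exact: exp_ineq1_le.
suff : a * (exp (c * x) - 1) + x * b0 * (- c + c ^ 2 / 2) <= c^2 * x by lra.
have : x * b0 * c^2/2 <= x * c^2/2.
  have : 0 <= x*c^2*(1-b0) by apply: Rmult_le_pos; nra.
  lra.
have : a = b0 - b0 * pu by rewrite ha; ring.
have : 0 <= x * b0 * pu * c by apply: Rmult_le_pos; [apply: Rmult_le_pos; nra | lra].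
nra.
Qed.

Lemma mgf_lo pu (n : nat) s : 0 <= pu <= 1 -> (1 <= n)%nat -> 0 <= s ->
  Mf pu n (- (INR n * s)) <= exp (s * pu + INR n * pu * (exp s - 1 - s + s^2/2)).
Proof.
move=> hp hn hs.
have hxb := xb0_le1 pu n hp hn.
have hN : 0 < INR n by apply: lt_0_INR; apply/ltP.
rewrite /Mf.
set N := INR n in hN hxb *.
set x := N * pu.
have hx : 0 <= x by rewrite /x; nra.
have e1 : - (N * s) * pu = - (s * x) by rewrite /x; ring.
have e2 : - - (N * s) / N = s by field; lra.
rewrite e1 e2.
have ha := pow_split pu n hn.
set b0 := (1-pu)^n.-1 in ha hxb *.
set a := (1-pu)^n in ha *.
have hb0 : 0 <= b0 <= 1 by apply: pow_le1.
have hsx : 0 <= s * x by nra.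
have h1 := E1 (s*x) hsx.
have hphi := exp_ineq1_le s.
have h2 : x * b0 <= 1 by rewrite /x.
have h3 : 0 <= a by rewrite ha; nra.
set E := exp s - 1 - s + s^2/2.
have h7 : 1 + (s * pu + N * pu * E) <= exp (s * pu + N * pu * E) by exact: exp_ineq1_le.
suff : a * (exp (- (s * x)) - 1) + N * pu * b0 * (exp s - 1) <= s * pu + x * E.
  rewrite /x; lra.
have h4 : a * (exp (- (s * x)) - 1) <= a * (- (s*x) + (s*x)^2/2) by apply: Rmult_le_compat_l; lra.
have h5 : x * b0 * (exp s - 1 - s) <= x * (exp s - 1 - s).
  have : 0 <= x * (exp s - 1 - s) * (1 - b0) by apply: Rmult_le_pos; nra.
  nra.
have h6 : a * x <= 1 by rewrite ha; nra.
have h8 : a * (s*x)^2/2 <= s^2 * x / 2.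
  have : a * (s*x)^2/2 = (a * x) * (s^2 * x /2) by field.
  have : 0 <= s^2 * x / 2 by nra.
  nra.
have h9 : - a * s * x + x * b0 * s <= s * pu.
  have -> : - a * s * x + x * b0 * s = s * pu * (x * b0) by rewrite ha /x; ring.
  have : 0 <= s * pu by nra.
  nra.
have -> : N * pu * b0 = x * b0 by rewrite /x.
rewrite /E. nra.
Qed.

Lemma RplusA' : associative Rplus.
Proof. by move=> x y z; rewrite Rplus_assoc. Qed.
Lemma RmultA' : associative Rmult.
Proof. by move=> x y z; rewrite Rmult_assoc. Qed.

HB.instance Definition _ := Monoid.isComLaw.Build R 0 Rplus RplusA' Rplus_comm Rplus_0_l.
HB.instance Definition _ := Monoid.isComLaw.Build R 1 Rmult RmultA' Rmult_comm Rmult_1_l.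
HB.instance Definition _ := Monoid.isMulLaw.Build R 0 Rmult Rmult_0_l Rmult_0_r.
HB.instance Definition _ := Monoid.isAddLaw.Build R Rmult Rplus
  Rmult_plus_distr_r Rmult_plus_distr_l.

Definition qv (pu : R) (b : bool) : R := if b then pu else 1 - pu.
Definition b2R (b : bool) : R := if b then 1 else 0.
Definition slice {A : finType} {n : nat} (w : outcome A n) (u : A) : {ffun 'I_n -> bool} :=
  [ffun i => w (i, u)].
Definition piv {n : nat} (pu : R) (v : {ffun 'I_n -> bool}) : R :=
  \big[Rmult/1]_(i < n) qv pu (v i).
Definition Ev {n : nat} (pu : R) (G : {ffun 'I_n -> bool} -> R) : R :=
  \big[Rplus/0]_(v : {ffun 'I_n -> bool}) (piv pu v * G v).

Lemma prod_sum (n : nat) (F : 'I_n -> bool -> R) :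
  \big[Rplus/0]_(v : {ffun 'I_n -> bool}) \big[Rmult/1]_(i < n) F i (v i)
  = \big[Rmult/1]_(i < n) (F i true + F i false).
Proof.
rewrite -bigA_distr_bigA; apply: eq_bigr => i _; by rewrite big_bool.
Qed.

Lemma indep (A : finType) (n : nat) (p : A -> R) (G : A -> {ffun 'I_n -> bool} -> R) :
  \big[Rplus/0]_(w : outcome A n) (weight p w * \big[Rmult/1]_(u : A) G u (slice w u))
  = \big[Rmult/1]_(u : A) Ev (p u) (G u).
Proof.
rewrite /Ev bigA_distr_bigA.
have step : forall w : outcome A n, weight p w * \big[Rmult/1]_(u : A) G u (slice w u)
   = \big[Rmult/1]_(u : A) (piv (p u) (slice w u) * G u (slice w u)).
  move=> w; rewrite big_split /=; congr Rmult.
  have e : weight p w = \big[Rmult/1]_(i < n) \big[Rmult/1]_(u : A) (if w (i,u) then p u else 1 - p u).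
    by rewrite pair_bigA; apply: eq_bigr => -[i u].
  rewrite e /piv.
  rewrite exchange_big; apply: eq_bigr => u _; apply: eq_bigr => i _.
  by rewrite /qv /slice ffunE.
under eq_bigr do rewrite step.
pose h := fun f : {ffun A -> {ffun 'I_n -> bool}} => ([ffun k : 'I_n * A => f k.2 k.1] : outcome A n).
pose g := fun w : outcome A n => [ffun u => slice w u].
have hbij : bijective h.
  exists g.
  - move=> f; apply/ffunP => u; rewrite /g /h ffunE; apply/ffunP => i.
    by rewrite /slice !ffunE.
  - move=> w; apply/ffunP => -[i u]; rewrite /g /h !ffunE /slice //.
rewrite (reindex h (onW_bij _ hbij)) /=.
apply: eq_bigr => f _; apply: eq_bigr => u _.
have -> : slice (h f) u = f u by apply/ffunP => i; rewrite /slice /h !ffunE.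
by [].
Qed.

Lemma iter_mult (c : R) (m : nat) : iter m (Rmult c) 1 = c ^ m.
Proof. by elim: m => //= m ->. Qed.

Lemma iter_plus (c : R) (m : nat) : iter m (Rplus c) 0 = INR m * c.
Proof. elim: m => [|m IH]; first by rewrite /= Rmult_0_l. rewrite S_INR /= IH; ring. Qed.

Lemma prod_const (n : nat) (c : R) : \big[Rmult/1]_(i < n) c = c ^ n.
Proof. by rewrite big_const_ord iter_mult. Qed.

Lemma Ev1 (n : nat) pu : Ev (n:=n) pu (fun _ => 1) = 1.
Proof.
rewrite /Ev /piv; under eq_bigr do rewrite Rmult_1_r.
rewrite (prod_sum _ (fun i b => qv pu b)) /qv.
rewrite (eq_bigr (fun _ => 1)) ?prod_const ?pow1 // => i _; ring.
Qed.

Lemma prod_b2R (n : nat) (P : 'I_n -> bool) :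
  \big[Rmult/1]_(i < n) b2R (P i) = b2R [forall i, P i].
Proof.
rewrite {2}/b2R; case: ifPn => h.
  by apply: big1 => i _; rewrite (forallP h).
move/forallPn: h => [j hj].
by rewrite (bigD1 j) //= (negbTE hj) /b2R Rmult_0_l.
Qed.

Definition Nv {n : nat} (v : {ffun 'I_n -> bool}) : nat := \sum_(i < n) v i.
Definition Yv {n : nat} (pu : R) (v : {ffun 'I_n -> bool}) : R :=
  (if Nv v == 0%nat then pu else 0) - INR (Nv v == 1%nat) / INR n.

Lemma INR_b2R (b : bool) : INR b = b2R b.
Proof. by case: b. Qed.

Lemma Nv0 (n : nat) (v : {ffun 'I_n -> bool}) :
  b2R (Nv v == 0%nat) = \big[Rmult/1]_(i < n) b2R (~~ v i).
Proof.
rewrite prod_b2R /Nv sum_nat_eq0; congr b2R; apply: eq_forallb => i.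
by case: (v i).
Qed.

Lemma Nv1 (n : nat) (v : {ffun 'I_n -> bool}) :
  b2R (Nv v == 1%nat) = \big[Rplus/0]_(j < n) \big[Rmult/1]_(i < n) b2R (if i == j then v i else ~~ v i).
Proof.
under eq_bigr do rewrite prod_b2R.
have e : forall j, [forall i, if i == j then v i else ~~ v i] = v j && (Nv v == 1%nat).
  move=> j; rewrite /Nv (bigD1 j) //=.
  apply/idP/idP.
  - move/forallP => h; have hj := h j; rewrite eqxx in hj; rewrite hj /=.
    rewrite big1 // => i /= hij; have := h i; rewrite (negbTE hij); by case: (v i).
  - move/andP => [hj]; rewrite hj add1n eqSS sum_nat_eq0 => /forallP h.
    apply/forallP => i; case: eqP => [->|/eqP hij] //.
    by have := h i; rewrite hij /=; case: (v i).
under eq_bigr do rewrite e.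
have e2 : forall j, b2R (v j && (Nv v == 1%nat)) = b2R (Nv v == 1%nat) * b2R (v j).
  by move=> j; case: (v j); case: (Nv v == 1%nat); rewrite /b2R /=; ring.
under eq_bigr do rewrite e2.
rewrite -big_distrr /=.
have e3 : \big[Rplus/0]_(j < n) b2R (v j) = INR (Nv v).
  rewrite /Nv (big_morph INR plus_INR (erefl (INR 0))).
  by apply: eq_bigr => j _; rewrite INR_b2R.
rewrite e3; case: eqP => [->|_] /=; rewrite /b2R; ring.
Qed.

Lemma prod_ifj (n : nat) (j : 'I_n) (a b : R) :
  \big[Rmult/1]_(i < n) (if i == j then a else b) = a * b ^ n.-1.
Proof.
rewrite (bigD1 j) //= eqxx; congr Rmult.
rewrite (eq_bigr (fun _ => b)); last by move=> i /negbTE ->.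
rewrite -big_filter big_const_seq iter_mult; congr pow.
rewrite count_predT size_filter.
have := cardC1 j. rewrite card_ord cardE /enum_mem size_filter.
by move=> <-.
Qed.

Lemma EvZ (n : nat) pu : Ev (n:=n) pu (fun v => b2R (Nv v == 0%nat)) = (1-pu)^n.
Proof.
rewrite /Ev /piv; under eq_bigr do rewrite Nv0 -big_split /=.
rewrite (prod_sum _ (fun i b => qv pu b * b2R (~~ b))) /qv /b2R /=.
rewrite (eq_bigr (fun _ => 1 - pu)) ?prod_const // => i _; ring.
Qed.

Lemma EvU (n : nat) pu : Ev (n:=n) pu (fun v => b2R (Nv v == 1%nat)) = INR n * pu * (1-pu)^n.-1.
Proof.
rewrite /Ev; under eq_bigr do rewrite Nv1 big_distrr /=.
rewrite exchange_big /=.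
rewrite (eq_bigr (fun _ => pu * (1-pu)^n.-1)).
  by rewrite big_const_ord iter_plus Rmult_assoc.
move=> j _; rewrite /piv; under eq_bigr do rewrite -big_split /=.
rewrite (prod_sum _ (fun i b => qv pu b * b2R (if i == j then b else ~~ b))) /qv /b2R /=.
rewrite -(prod_ifj _ j); apply: eq_bigr => i _; case: (i == j); ring.
Qed.


Lemma EvM (n : nat) pu tau :
  Ev (n:=n) pu (fun v => exp (tau * Yv pu v)) = Mf pu n tau.
Proof.
have pw : forall v : {ffun 'I_n -> bool}, exp (tau * Yv pu v) =
   1 + b2R (Nv v == 0%nat) * (exp (tau * pu) - 1)
     + b2R (Nv v == 1%nat) * (exp (- tau / INR n) - 1).
  move=> v; rewrite /Yv /b2R.
  have [h0|h0] := eqVneq (Nv v) 0%nat.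
    rewrite h0 /= /Rdiv Rmult_0_l Rminus_0_r; ring.
  have [h1|h1] := eqVneq (Nv v) 1%nat.
    rewrite /= /Rdiv; have -> : tau * (0 - 1 * / INR n) = - tau * / INR n by ring.
    ring.
  rewrite /= /Rdiv Rmult_0_l Rminus_0_r Rmult_0_r exp_0; ring.
rewrite /Ev; under eq_bigr do rewrite pw.
have -> : forall (c d : R),
  \big[Rplus/0]_(v : {ffun 'I_n -> bool}) (piv pu v * (1 + b2R (Nv v == 0%nat) * c + b2R (Nv v == 1%nat) * d))
  = \big[Rplus/0]_(v : {ffun 'I_n -> bool}) (piv pu v * 1) + (\big[Rplus/0]_(v : {ffun 'I_n -> bool}) (piv pu v * b2R (Nv v == 0%nat))) * c
    + (\big[Rplus/0]_(v : {ffun 'I_n -> bool}) (piv pu v * b2R (Nv v == 1%nat))) * d.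
  move=> c d; rewrite !big_distrl -!big_split /=; apply: eq_bigr => v _; ring.
have := Ev1 n pu; rewrite /Ev => ->.
have := EvZ n pu; rewrite /Ev => ->.
have := EvU n pu; rewrite /Ev => ->.
by rewrite /Mf.
Qed.

Lemma nact_slice (A : finType) (n : nat) (w : outcome A n) u : nact w u = Nv (slice w u).
Proof. by rewrite /nact /Nv; apply: eq_bigr => i _; rewrite ffunE. Qed.

Lemma D_sum (A : finType) (p : A -> R) (n : nat) (w : outcome A n) :
  Rn p w - Rhat w = \big[Rplus/0]_(u : A) Yv (p u) (slice w u).
Proof.
rewrite /Rn /Rhat /Yv /Zn /Un.
rewrite (big_morph INR plus_INR (erefl (INR 0))) /Rdiv big_distrl /=.
rewrite /Rminus (big_morph Ropp Ropp_plus_distr Ropp_0) -big_split /=.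
apply: eq_bigr => u _; rewrite nact_slice //.
Qed.

Lemma weight_ge0 (A : finType) (p : A -> R) (n : nat) (w : outcome A n) :
  (forall u, 0 <= p u <= 1) -> 0 <= weight p w.
Proof.
move=> hp; rewrite /weight; apply: (big_ind (fun x => 0 <= x)).
- lra.
- by move=> x y hx hy; apply: Rmult_le_pos.
- move=> [i u] _ /=; case: (w (i,u)) => /=; move: (hp u) => hk; lra.
Qed.

Lemma exp_sum (I : finType) (tau : R) (F : I -> R) :
  exp (tau * \big[Rplus/0]_(i : I) F i) = \big[Rmult/1]_(i : I) exp (tau * F i).
Proof.
apply: (big_morph (fun x => exp (tau * x))).
- by move=> x y /=; rewrite Rmult_plus_distr_l exp_plus.
- by rewrite Rmult_0_r exp_0.
Qed.

Lemma mgfD (A : finType) (p : A -> R) (n : nat) (tau : R) :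
  \big[Rplus/0]_(w : outcome A n) (weight p w * exp (tau * (Rn p w - Rhat w)))
  = \big[Rmult/1]_(u : A) Mf (p u) n tau.
Proof.
rewrite (eq_bigr (fun w => weight p w * \big[Rmult/1]_(u : A) exp (tau * Yv (p u) (slice w u)))); last first.
  by move=> w _; rewrite (D_sum _ p _ w) exp_sum.
rewrite (indep _ _ p (fun u v => exp (tau * Yv (p u) v))).
by apply: eq_bigr => u _; rewrite EvM.
Qed.

Lemma weight_sum (A : finType) (p : A -> R) (n : nat) :
  \big[Rplus/0]_(w : outcome A n) weight p w = 1.
Proof.
have := mgfD _ p n 0.
rewrite (eq_bigr (fun w => weight p w)); last first.
  by move=> w _; rewrite Rmult_0_l exp_0 Rmult_1_r.
move=> ->; apply: big1 => u _; rewrite /Mf Rmult_0_l.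
rewrite /Rdiv Ropp_0 Rmult_0_l exp_0; ring.
Qed.

Lemma sum_le (I : finType) (F G : I -> R) :
  (forall i, F i <= G i) -> \big[Rplus/0]_(i : I) F i <= \big[Rplus/0]_(i : I) G i.
Proof.
move=> h; apply: (big_ind2 (fun x y => x <= y)); first lra.
- by move=> x1 x2 y1 y2 h1 h2; lra.
- by move=> i _; apply: h.
Qed.

Lemma prod_le (I : finType) (F G : I -> R) :
  (forall i, 0 <= F i <= G i) -> \big[Rmult/1]_(i : I) F i <= \big[Rmult/1]_(i : I) G i.
Proof.
move=> h.
suff : 0 <= \big[Rmult/1]_(i : I) F i <= \big[Rmult/1]_(i : I) G i by case.
apply: (big_ind2 (fun x y => 0 <= x <= y)); first lra.
- move=> x1 x2 y1 y2 h1 h2; split; first by apply: Rmult_le_pos; lra.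
  apply: Rmult_le_compat; lra.
- by move=> i _; apply: h.
Qed.

Lemma exp_sum1 (I : finType) (F : I -> R) :
  \big[Rmult/1]_(i : I) exp (F i) = exp (\big[Rplus/0]_(i : I) F i).
Proof.
have := exp_sum _ 1 F; rewrite Rmult_1_l => ->.
by apply: eq_bigr => i _; rewrite Rmult_1_l.
Qed.

Lemma Mf_ge0 pu (n : nat) tau : 0 <= pu <= 1 -> 0 <= Mf pu n tau.
Proof.
move=> hp; rewrite -EvM /Ev; apply: (big_ind (fun x => 0 <= x)); first lra.
  by move=> x y; lra.
move=> v _; apply: Rmult_le_pos; last by left; apply: exp_pos.
rewrite /piv; apply: (big_ind (fun x => 0 <= x)); first lra.
  by move=> x y hx hy; apply: Rmult_le_pos.
by move=> i _; rewrite /qv; case: (v i); lra.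
Qed.

Lemma markov (A : finType) (p : A -> R) (n : nat) (E : outcome A n -> bool) (f : outcome A n -> R) :
  (forall u, 0 <= p u <= 1) -> (forall w, E w -> 1 <= f w) -> (forall w, 0 <= f w) ->
  prob p E <= \big[Rplus/0]_(w : outcome A n) (weight p w * f w).
Proof.
move=> hp h1 h0; rewrite /prob big_mkcond /=; apply: sum_le => w.
have hw := weight_ge0 _ p _ w hp.
case: ifP => hE.
- have := h1 w hE; nra.
- have := h0 w; nra.
Qed.

Lemma prob_compl (A : finType) (p : A -> R) (n : nat) (E : outcome A n -> bool) :
  prob p E = 1 - prob p (fun w => ~~ E w).
Proof.
suff : prob p E + prob p (fun w => ~~ E w) = 1 by lra.
by rewrite /prob -(weight_sum _ p n) [in RHS](bigID E).
Qed.

Definition Dw {A : finType} (p : A -> R) {n : nat} (w : outcome A n) : R := Rn p w - Rhat w.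

Lemma lambda_ge0 (A : finType) (p : A -> R) : (forall u, 0 <= p u <= 1) -> 0 <= lambda p.
Proof.
move=> hp; rewrite /lambda; apply: (big_ind (fun x => 0 <= x)); first lra.
  by move=> x y; lra.
by move=> u _; have := hp u; lra.
Qed.

Lemma D_le_lambda (A : finType) (p : A -> R) (n : nat) (w : outcome A n) :
  (forall u, 0 <= p u <= 1) -> (1 <= n)%nat -> Dw p w <= lambda p.
Proof.
move=> hp hn.
have hN : 0 < INR n by apply: lt_0_INR; apply/ltP.
have h1 : Rn p w <= lambda p.
  rewrite /Rn /lambda; apply: sum_le => u; case: ifP => _; have := hp u; lra.
have h2 : 0 <= Rhat w.
  rewrite /Rhat /Rdiv; apply: Rmult_le_pos; first exact: pos_INR.
  by left; apply: Rinv_0_lt_compat.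
rewrite /Dw; lra.
Qed.

Lemma sum_scale (A : finType) (p : A -> R) (n : nat) (tau b : R) :
  \big[Rplus/0]_(w : outcome A n) (weight p w * exp (tau * Dw p w - b))
  = exp (- b) * \big[Rmult/1]_(u : A) Mf (p u) n tau.
Proof.
rewrite -mgfD big_distrr /=; apply: eq_bigr => w _.
have e : forall x, exp (x - b) = exp x * exp (-b) by move=> x; rewrite -exp_plus.
rewrite e /Dw; ring.
Qed.

Lemma up_tail (A : finType) (p : A -> R) (n : nat) (L q y r b : R) :
  (forall u, 0 <= p u <= 1) -> (1 <= n)%nat -> 0 < L -> 0 <= q -> 0 <= y ->
  INR n * q = y * L -> lambda p = q * y -> 2 <= r -> r * q + / (3 * INR n) * L <= b ->
  exists f : outcome A n -> R, (forall w, 0 <= f w) /\ (forall w, b < Dw p w -> 1 <= f w)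
    /\ \big[Rplus/0]_(w : outcome A n) (weight p w * f w) <= exp (- L).
Proof.
move=> hp hn hL hq hy hNq hlam hr hb.
have hN : 0 < INR n by apply: lt_0_INR; apply/ltP.
have h3 : 0 <= / (3 * INR n) * L by apply: Rmult_le_pos; [left; apply: Rinv_0_lt_compat; lra | lra].
destruct (Rle_lt_dec y 1) as [c1|c1].
  exists (fun _ => 0); split; first by move=> _; lra.
  split.
    move=> w hw; have := D_le_lambda _ p _ w hp hn.
    have : q * y <= q by nra.
    nra.
  rewrite big1; first by left; apply: exp_pos.
  by move=> w _; rewrite Rmult_0_r.
set c := / y.
have hc : 0 < c <= 1.
  split; first by apply: Rinv_0_lt_compat; lra.
  rewrite /c -Rinv_1; apply: Rinv_le_contravar; lra.
have hyc : y * c = 1 by rewrite /c; field; lra.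
set tau := INR n * c.
exists (fun w => exp (tau * Dw p w - tau * b)).
split; first by move=> w; left; apply: exp_pos.
split.
  move=> w hw; have := exp_ineq1_le (tau * Dw p w - tau * b).
  have : 0 <= tau * Dw p w - tau * b.
    have : 0 < tau by rewrite /tau; nra.
    nra.
  lra.
rewrite sum_scale.
have hprod : \big[Rmult/1]_(u : A) Mf (p u) n tau <= exp (lambda p * INR n * c^2).
  apply: Rle_trans (_ : \big[Rmult/1]_(u : A) exp (p u * INR n * c^2) <= _).
    apply: prod_le => u; split; first exact: Mf_ge0.
    exact: mgf_up.
  rewrite exp_sum1 /lambda; right; congr exp.
  rewrite big_distrl big_distrl /=; apply: eq_bigr => u _; ring.
have hL1 : lambda p * INR n * c^2 = L.
  rewrite hlam; have : q * y * INR n * c ^ 2 = (INR n * q) * c * (y * c) by ring.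
  move=> ->; rewrite hyc hNq; have : y * L * c * 1 = L * (y * c) by ring.
  by move=> ->; rewrite hyc Rmult_1_r.
have htb : r * L <= tau * b.
  have e : tau * (r * q) = r * L.
    rewrite /tau; have : INR n * c * (r * q) = r * (INR n * q) * c by ring.
    move=> ->; rewrite hNq; have : r * (y * L) * c = r * L * (y * c) by ring.
    by move=> ->; rewrite hyc Rmult_1_r.
  have : 0 < tau by rewrite /tau; nra.
  nra.
have := exp_pos (- (tau * b)).
have : exp (- (tau * b)) * exp (lambda p * INR n * c ^ 2) <= exp (- L).
  rewrite -exp_plus hL1; apply: exp_mono; nra.
move=> h1 h2.
have := Rmult_le_compat_l _ _ _ (Rlt_le _ _ h2) hprod.
lra.
Qed.

Lemma lo_tail (A : finType) (p : A -> R) (n : nat) (L q y r b : R) :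
  (forall u, 0 <= p u <= 1) -> (1 <= n)%nat -> 0 < L -> 0 <= q -> 0 <= y ->
  INR n * q = y * L -> lambda p = q * y -> 2.41 <= r -> r * q + / (3 * INR n) * L <= b ->
  exists f : outcome A n -> R, (forall w, 0 <= f w) /\
    (forall w, Dw p w < - b - lambda p / INR n -> 1 <= f w)
    /\ \big[Rplus/0]_(w : outcome A n) (weight p w * f w) <= exp (- L).
Proof.
move=> hp hn hL hq hy hNq hlam hr hb.
have hN : 0 < INR n by apply: lt_0_INR; apply/ltP.
have [s [hs hsy]] := choose_s y r hy hr.
set N := INR n in hN hNq hb *.
set tau := - (N * s).
set B := N * s * (b + lambda p / N).
exists (fun w => exp (tau * Dw p w - B)).
split; first by move=> w; left; apply: exp_pos.
split.
  move=> w hw; have := exp_ineq1_le (tau * Dw p w - B).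
  have : 0 <= tau * Dw p w - B.
    have -> : tau * Dw p w - B = N * s * (- Dw p w - b - lambda p / N) by rewrite /tau /B; field; lra.
    apply: Rmult_le_pos; [nra | lra].
  lra.
rewrite sum_scale.
set phi := exp s - 1 - s + s^2/2.
have hprod : \big[Rmult/1]_(u : A) Mf (p u) n tau <= exp (s * lambda p + N * lambda p * phi).
  apply: Rle_trans (_ : \big[Rmult/1]_(u : A) exp (s * p u + N * p u * phi) <= _).
    apply: prod_le => u; split; first exact: Mf_ge0.
    exact: mgf_lo.
  rewrite exp_sum1 /lambda; right; congr exp.
  rewrite big_split /=; congr Rplus; first by rewrite big_distrr.
  rewrite big_distrr big_distrl /=; apply: eq_bigr => u _; ring.
have hpos := exp_pos (- B).
have h2 := Rmult_le_compat_l _ _ _ (Rlt_le _ _ hpos) hprod.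
apply: Rle_trans h2 _.
rewrite -exp_plus; apply: exp_mono.
have e1 : N * lambda p = y^2 * L.
  rewrite hlam; have -> : N * (q * y) = (N * q) * y by ring.
  rewrite hNq; ring.
have e2 : N * s * b >= s * L * (r * y + 1/3).
  have e3 : N * (r * q + / (3 * N) * L) = L * (r * y + 1/3).
    have -> : N * (r * q + / (3 * N) * L) = r * (N * q) + L * (N * / (3 * N)) by ring.
    rewrite hNq; have -> : N * / (3 * N) = 1/3 by field; lra.
    ring.
  have : N * s * (r * q + / (3 * N) * L) <= N * s * b.
    apply: Rmult_le_compat_l; nra.
  have -> : N * s * (r * q + / (3 * N) * L) = s * (N * (r * q + / (3 * N) * L)) by ring.
  rewrite e3; lra.
have e4 : - B = - (N * s * b) - s * lambda p.
  rewrite /B; field; lra.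
rewrite e4.
have : L * (y^2 * phi - s * (r * y + 1/3)) <= L * (-1) by apply: Rmult_le_compat_l; rewrite /phi; lra.
have -> : N * lambda p * phi = y^2 * L * phi by rewrite e1.
nra.
Qed.

Lemma Rleb_false x y : Rleb x y = false -> y < x.
Proof. rewrite /Rleb; case: Rle_dec => // h _; lra. Qed.

Close Scope R_scope.

Theorem theorem1 (A : finType) (p : A -> R)
  (hp : forall u, (0 <= p u <= 1)%R)
  (n : nat) (hn : (1 <= n)%N) (delta : R) (hd : (0 < delta < 1)%R) :
  (1 - delta <=
   prob p (fun w : outcome A n =>
     Rleb (- beta p n delta - lambda p / INR n) (Rn p w - Rhat w)
     && Rleb (Rn p w - Rhat w) (beta p n delta)))%R.
Proof.
Local Open Scope R_scope.
have hN : 0 < INR n by apply: lt_0_INR; apply/ltP.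
set L := ln (4 / delta).
have hL : 0 < L.
  rewrite /L -ln_1; apply: ln_increasing; first lra.
  apply: (Rmult_lt_reg_r delta); first lra.
  rewrite /Rdiv Rmult_assoc Rinv_l; lra.
have hexpL : exp (- L) = delta / 4.
  rewrite exp_Ropp /L exp_ln; last by apply: Rdiv_lt_0_compat; lra.
  field; lra.
have hlam0 := lambda_ge0 _ p hp.
set lam := lambda p in hlam0 *.
have hq0 : 0 <= lam * L / INR n.
  apply: Rmult_le_pos; [nra | left; apply: Rinv_0_lt_compat; lra].
set q := sqrt (lam * L / INR n).
have hq : 0 <= q by apply: sqrt_pos.
have hq2 : q * q = lam * L / INR n by apply: sqrt_sqrt.
set y := INR n * q / L.
have hy : 0 <= y by rewrite /y; apply: Rmult_le_pos; [nra | left; apply: Rinv_0_lt_compat; lra].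
have hNq : INR n * q = y * L by rewrite /y; field; lra.
have hlamq : lam = q * y.
  have -> : q * y = INR n * (q * q) / L by rewrite /y; field; lra.
  rewrite hq2; field; lra.
set r := 1 + sqrt 2.
have hr : 2.41 <= r by have := sqrt2_ge; rewrite /r; lra.
have hb : r * q + / (3 * INR n) * L <= beta p n delta.
  by rewrite /beta; right.
have [fu [fu0 [fu1 fus]]] := up_tail _ p n L q y r (beta p n delta) hp hn hL hq hy hNq hlamq ltac:(lra) hb.
have [fl [fl0 [fl1 fls]]] := lo_tail _ p n L q y r (beta p n delta) hp hn hL hq hy hNq hlamq hr hb.
rewrite prob_compl.
have hbad : prob p (fun w : outcome A n => ~~ (Rleb (- beta p n delta - lam / INR n) (Rn p w - Rhat w)
     && Rleb (Rn p w - Rhat w) (beta p n delta)))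
   <= \big[Rplus/0]_(w : outcome A n) (weight p w * (fu w + fl w)).
  apply: markov => //.
  - move=> w; rewrite negb_and => /orP [h|h].
    + have := Rleb_false _ _ (negbTE h) => h'.
      have := fl1 w h'; have := fu0 w; lra.
    + have := Rleb_false _ _ (negbTE h) => h'.
      have := fu1 w h'; have := fl0 w; lra.
  - by move=> w; have := fu0 w; have := fl0 w; lra.
have hsplit : \big[Rplus/0]_(w : outcome A n) (weight p w * (fu w + fl w))
   = \big[Rplus/0]_(w : outcome A n) (weight p w * fu w) + \big[Rplus/0]_(w : outcome A n) (weight p w * fl w).
  rewrite -big_split /=; apply: eq_bigr => w _; ring.
lra.
Qed.
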